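(* Let $\phi$ be the real root of $x^3=x^2+x+1$. For any positive integer $k$ and any integer $n>0.2\phi^{3k/2}$, there exists a positive tribonacci sequence of length $k$ terminating at $n$.
   Context: A tribonacci sequence of length $k$ is a sequence of integers $\langle a_i\rangle_{i=1}^k$ such that $a_i=a_{i-1}+a_{i-2}+a_{i-3}$ for all $4\le i\le k$. It terminates at $a_k$, and it is positive if $a_1,a_2,a_3>0$ (for length less than 3, all terms are required to be positive). *)

(* Defs.v *)
From Stdlib Require Import Reals ZArith Arith Lia.

(* A sequence <a_i>_{i=1}^k is represented by a : nat -> Z; only the
   values at indices 1..k matter. *)

Definition is_tribonacci (k : nat) (a : nat -> Z) : Prop :=
  forall i : nat, (4 <= i <= k)%nat ->
    a i = (a (i - 1)%nat + a (i - 2)%nat + a (i - 3)%nat)%Z.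

Definition positive_seq (k : nat) (a : nat -> Z) : Prop :=
  forall i : nat, (1 <= i <= Nat.min k 3)%nat -> (0 < a i)%Z.

(* Main.v *)
Require Import Defs.
From Stdlib Require Import Reals ZArith Arith Lia.
From Stdlib Require Import Lra Psatz Nsatz.

Open Scope R_scope.
Definition Qe phi e1 e2 := e2^2 + (phi-1)*e1*e2 + (phi^2-phi-1)*e1^2.
Definition lam (phi x y z : R) := x + (phi^2-phi)*y + phi*z.
Definition Qf (phi x y z : R) := Qe phi (y - phi*x) (z - phi*y).

Lemma phi_bounds phi : phi ^ 3 = phi ^ 2 + phi + 1 -> 1.8392 < phi < 1.8393.
Proof.
  intros h. split.
  - destruct (Rlt_or_le 1.8392 phi) as [H|H]; auto. exfalso.
    assert (0 <= (1.8392 - phi) * ((phi + 0.4196)^2 + 0.36)) by (apply Rmult_le_pos; nra).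
    nra.
  - destruct (Rlt_or_le phi 1.8393) as [H|H]; auto. exfalso.
    assert (0 <= (phi - 1.8393) * ((phi + 0.41965)^2 + 0.36)) by (apply Rmult_le_pos; nra).
    nra.
Qed.

Lemma psd2 A B C e1 e2 : 0 < C -> B^2 <= 4*A*C -> 0 <= A*e1^2 + B*e1*e2 + C*e2^2.
Proof.
  intros hC hD.
  assert (4*C*(A*e1^2 + B*e1*e2 + C*e2^2) = (2*C*e2 + B*e1)^2 + (4*A*C - B^2)*e1^2) by ring.
  assert (0 <= (2*C*e2 + B*e1)^2 + (4*A*C - B^2)*e1^2).
  { apply Rplus_le_le_0_compat. apply pow2_ge_0. apply Rmult_le_pos. lra. apply pow2_ge_0. }
  nra.
Qed.

Lemma qb1 phi e1 e2 : 1.8392 < phi < 1.8393 ->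
  (( 2*phi^2-phi)*e1 + phi*e2)^2 <= 55*(Qe phi e1 e2).
Proof.
  unfold Qe. intros hp.
  assert (H: 0 <= (55*(phi^2-phi-1) - (2*phi^2-phi)^2)*e1^2 + (55*(phi-1) - 2*(2*phi^2-phi)*phi)*e1*e2 + (55 - phi^2)*e2^2).
  { apply psd2. nra.
    assert (5.6 <= 55*(phi^2-phi-1) - (2*phi^2-phi)^2) by nra.
    assert (28 <= 55*(phi-1) - 2*(2*phi^2-phi)*phi <= 28.1) by nra.
    assert (51.6 <= 55 - phi^2) by nra. nra. }
  nra.
Qed.

Lemma qb2 phi e1 e2 : 1.8392 < phi < 1.8393 ->
  ((-1)*e1 + phi^2*e2)^2 <= 55*(Qe phi e1 e2).
Proof.
  unfold Qe. intros hp.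
  assert (H: 0 <= (55*(phi^2-phi-1) - 1)*e1^2 + (55*(phi-1) + 2*phi^2)*e1*e2 + (55 - phi^4)*e2^2).
  assert (3.38 <= phi^2 <= 3.384) by nra.
  assert (phi^4 <= 11.46) by (replace (phi^4) with (phi^2*phi^2) by ring; nra).
  { apply psd2. lra.
    assert (28.8 <= 55*(phi^2-phi-1) - 1) by nra.
    assert (52 <= 55*(phi-1) + 2*phi^2 <= 54) by nra.
    assert (43 <= 55 - phi^4) by lra. nra. }
  nra.
Qed.

Lemma qb3 phi e1 e2 : 1.8392 < phi < 1.8393 ->
  (phi*e1 + (phi+2)*e2)^2 <= 55*(Qe phi e1 e2).
Proof.
  unfold Qe. intros hp.
  assert (H: 0 <= (55*(phi^2-phi-1) - phi^2)*e1^2 + (55*(phi-1) - 2*phi*(phi+2))*e1*e2 + (55 - (phi+2)^2)*e2^2).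
  { apply psd2. nra.
    assert (26 <= 55*(phi^2-phi-1) - phi^2) by nra.
    assert (31 <= 55*(phi-1) - 2*phi*(phi+2) <= 33) by nra.
    assert (40 <= 55 - (phi+2)^2) by nra. nra. }
  nra.
Qed.

Lemma conv1 al be ga a b x M : 0 <= al -> a <= x <= b ->
  al*a^2 + be*a + ga <= M -> al*b^2 + be*b + ga <= M -> al*x^2 + be*x + ga <= M.
Proof.
  intros h0 hx ha hb.
  destruct (Req_dec a b) as [E|E].
  - subst. assert (x = b) by lra. subst. lra.
  - assert (hab: 0 < b - a) by lra.
    assert (E2: (b-a)*(al*x^2 + be*x + ga) = (b-x)*(al*a^2 + be*a + ga) + (x-a)*(al*b^2 + be*b + ga) + al*(x-a)*(x-b)*(b-a)) by ring.
    assert (0 <= al*(x-a)*(b-x)*(b-a)).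
    { apply Rmult_le_pos; [apply Rmult_le_pos; [apply Rmult_le_pos|]|]; lra. }
    assert ((b-x)*(al*a^2 + be*a + ga) <= (b-x)*M) by (apply Rmult_le_compat_l; lra).
    assert ((x-a)*(al*b^2 + be*b + ga) <= (x-a)*M) by (apply Rmult_le_compat_l; lra).
    assert ((b-a)*(al*x^2 + be*x + ga) <= (b-a)*M) by nra.
    apply Rmult_le_reg_l with (b-a); lra.
Qed.

Lemma qbox phi e1 e2 a b c d : 1.8392 < phi < 1.8393 -> a <= e1 <= b -> c <= e2 <= d ->
  Qe phi a c <= 1.2 -> Qe phi a d <= 1.2 -> Qe phi b c <= 1.2 -> Qe phi b d <= 1.2 ->
  Qe phi e1 e2 <= 1.2.
Proof.
  unfold Qe. intros hp h1 h2 ac ad bc bd.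
  assert (hP : 0 <= phi^2-phi-1) by nra.
  replace (e2 ^ 2 + (phi - 1) * e1 * e2 + (phi ^ 2 - phi - 1) * e1 ^ 2) with
    ((phi^2-phi-1)*e1^2 + ((phi-1)*e2)*e1 + e2^2) by ring.
  apply conv1 with a b; auto.
  - replace ((phi ^ 2 - phi - 1) * a ^ 2 + (phi - 1) * e2 * a + e2 ^ 2) with
      (1*e2^2 + ((phi-1)*a)*e2 + (phi ^ 2 - phi - 1) * a ^ 2) by ring.
    apply conv1 with c d; auto; try lra.
  - replace ((phi ^ 2 - phi - 1) * b ^ 2 + (phi - 1) * e2 * b + e2 ^ 2) with
      (1*e2^2 + ((phi-1)*b)*e2 + (phi ^ 2 - phi - 1) * b ^ 2) by ring.
    apply conv1 with c d; auto; try lra.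
Qed.

Lemma box phi f g : 1.8392 < phi < 1.8393 -> 0 <= f < phi -> 0 <= g < phi ->
  exists dp dq : Z,
    Qe phi (g + IZR dp - phi*IZR dq) (f - phi*IZR dp) <= 1.2 /\
    -1.5 <= g + IZR dp - phi*IZR dq <= 1.35 /\ -1.2 <= f - phi*IZR dp <= 1.05.
Proof.
  intros hp hf hg.
  assert (3.3826 <= phi^2 <= 3.3831) by nra.
  destruct (Rle_or_lt f 0.65) as [F0|F0].
  - destruct (Rle_or_lt g 0.45) as [G0|G0].
    + exists 0%Z, 0%Z. simpl. rewrite !Rmult_0_r, !Rplus_0_r, !Rminus_0_r.
      split; [|lra].
      apply qbox with 0 0.45 0 0.65; try lra; unfold Qe; nra.
    + exists 0%Z, 1%Z. simpl. rewrite !Rmult_0_r, !Rplus_0_r, !Rminus_0_r, Rmult_1_r.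
      split; [|lra].
      apply qbox with (-1.3893) 0 0 0.65; try lra; unfold Qe; nra.
  - destruct (Rle_or_lt g 0.35) as [G0|G0].
    + exists 1%Z, 0%Z. simpl. rewrite !Rmult_0_r, !Rminus_0_r, Rmult_1_r.
      split; [|lra].
      apply qbox with 1 1.35 (-1.1893) 0; try lra; unfold Qe; nra.
    + destruct (Rle_or_lt f 1.05) as [F1|F1].
      * exists 0%Z, 1%Z. simpl. rewrite !Rmult_0_r, !Rplus_0_r, !Rminus_0_r, Rmult_1_r.
        split; [|lra].
        apply qbox with (-1.4893) 0 0.65 1.05; try lra; unfold Qe; nra.
      * exists 1%Z, 1%Z. simpl. rewrite Rmult_1_r.
        split; [|lra].
        apply qbox with (-0.4893) 1 (-0.7893) 0; try lra; unfold Qe; nra.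
Qed.

Lemma sq_lt L l : 0 < l -> L^2 < l^2 -> L < l.
Proof. intros h1 h2. destruct (Rlt_or_le L l) as [H|H]; auto. exfalso. nra. Qed.

Lemma pos_lam phi x y z : phi ^ 3 = phi ^ 2 + phi + 1 -> 1.8392 < phi < 1.8393 ->
  0 < lam phi x y z -> 55 * Qf phi x y z < (lam phi x y z)^2 -> 0 < x /\ 0 < y /\ 0 < z.
Proof.
  intros h hp hl hq. unfold Qf in hq.
  set (e1 := y - phi*x) in *. set (e2 := z - phi*y) in *.
  set (l := lam phi x y z) in *.
  assert (h': phi*phi*phi = phi*phi+phi+1) by (simpl in h; lra).
  assert (Kp : 0 < phi^2 + 2*phi + 3) by nra.
  assert (I1 : (phi^2+2*phi+3)*x = l - ((2*phi^2-phi)*e1 + phi*e2)).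
  { unfold l, lam, e1, e2. clear -h'. simpl. nsatz. }
  assert (I2 : (phi^2+2*phi+3)*y = phi*l - ((-1)*e1 + phi^2*e2)).
  { unfold l, lam, e1, e2. clear -h'. simpl. nsatz. }
  assert (I3 : (phi^2+2*phi+3)*z = phi^2*l + (phi*e1 + (phi+2)*e2)).
  { unfold l, lam, e1, e2. clear -h'. simpl. nsatz. }
  pose proof (qb1 phi e1 e2 hp). pose proof (qb2 phi e1 e2 hp). pose proof (qb3 phi e1 e2 hp).
  assert (l^2 <= (phi*l)^2) by nra.
  assert ((phi*l)^2 <= (phi^2*l)^2) by nra.
  assert (A1: (2*phi^2-phi)*e1 + phi*e2 < l) by (apply sq_lt; lra).
  assert (A2: (-1)*e1 + phi^2*e2 < phi * l) by (apply sq_lt; nra).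
  assert (A3: -(phi*e1 + (phi+2)*e2) < phi^2 * l) by (apply sq_lt; nra).
  split; [|split]; nra.
Qed.

Definition back (v : Z*Z*Z) : Z*Z*Z := match v with (x,y,z) => ((z-y-x)%Z, x, y) end.
Definition fwd (v : Z*Z*Z) : Z*Z*Z := match v with (x,y,z) => (y, z, (x+y+z)%Z) end.
Fixpoint backn (m : nat) (v : Z*Z*Z) : Z*Z*Z := match m with O => v | S m' => backn m' (back v) end.
Fixpoint fwdn (m : nat) (v : Z*Z*Z) : Z*Z*Z := match m with O => v | S m' => fwd (fwdn m' v) end.
Definition fst3 (v : Z*Z*Z) : Z := match v with (x,_,_) => x end.

Lemma fwd_back v : fwd (back v) = v.
Proof. destruct v as [[x y] z]; simpl. repeat f_equal; lia. Qed.

Lemma fwdn_backn m v : fwdn m (backn m v) = v.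
Proof.
  revert v; induction m as [|m IH]; intros v; simpl; [reflexivity|].
  rewrite IH. apply fwd_back.
Qed.

Lemma s_rec w j : fst3 (fwdn (S (S (S j))) w) =
  (fst3 (fwdn j w) + fst3 (fwdn (S j) w) + fst3 (fwdn (S (S j)) w))%Z.
Proof. simpl. destruct (fwdn j w) as [[a b] c]. simpl. ring. Qed.

Definition lamZ phi (v : Z*Z*Z) := match v with (x,y,z) => lam phi (IZR x) (IZR y) (IZR z) end.
Definition QZ phi (v : Z*Z*Z) := match v with (x,y,z) => Qf phi (IZR x) (IZR y) (IZR z) end.

Lemma lam_back phi v : phi ^ 3 = phi ^ 2 + phi + 1 -> lamZ phi (back v) * phi = lamZ phi v.
Proof.
  intros h. assert (h': phi*phi*phi = phi*phi+phi+1) by (simpl in h; lra).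
  destruct v as [[x y] z]. simpl lamZ. rewrite !minus_IZR. unfold lam. clear h. simpl. nsatz.
Qed.

Lemma Q_back phi v : phi ^ 3 = phi ^ 2 + phi + 1 -> QZ phi (back v) = phi * QZ phi v.
Proof.
  intros h. assert (h': phi*phi*phi = phi*phi+phi+1) by (simpl in h; lra).
  destruct v as [[x y] z]. simpl QZ. rewrite !minus_IZR. unfold Qf, Qe. clear h. simpl. nsatz.
Qed.

Lemma lam_backn phi m v : phi ^ 3 = phi ^ 2 + phi + 1 -> lamZ phi (backn m v) * phi ^ m = lamZ phi v.
Proof.
  intros h. revert v; induction m as [|m IH]; intros v; simpl backn.
  - simpl. ring.
  - rewrite <- (lam_back phi v h), <- (IH (back v)). simpl. ring.
Qed.

Lemma Q_backn phi m v : phi ^ 3 = phi ^ 2 + phi + 1 -> QZ phi (backn m v) = phi ^ m * QZ phi v.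
Proof.
  intros h. revert v; induction m as [|m IH]; intros v; simpl backn.
  - simpl. ring.
  - rewrite IH, (Q_back phi v h). simpl. ring.
Qed.

Theorem theorem3 (phi : R) (hphi : (phi ^ 3 = phi ^ 2 + phi + 1)%R)
  (k : nat) (hk : (0 < k)%nat) (n : Z)
  (hn : (IZR n > (1 / 5) * Rpower phi (3 * INR k / 2))%R) :
  exists a : nat -> Z,
    is_tribonacci k a /\ positive_seq k a /\ a k = n.
Proof.
  pose proof (phi_bounds phi hphi) as hp.
  set (Rp := Rpower phi (3 * INR k / 2)) in hn.
  assert (Rp0 : 0 < Rp) by (unfold Rp, Rpower; apply exp_pos).
  assert (Rp2 : Rp * Rp = phi ^ (3 * k)).
  { unfold Rp. rewrite <- Rpower_plus.
    replace (3 * INR k / 2 + 3 * INR k / 2) with (INR (3 * k)) by (rewrite mult_INR; simpl; field).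
    apply Rpower_pow. lra. }
  assert (npos : 0 < IZR n) by lra.
  assert (hsq : phi ^ (3 * k) < 25 * (IZR n)^2).
  { rewrite <- Rp2. nra. }
  assert (npz : (0 < n)%Z) by (apply lt_IZR; simpl; lra).
  destruct (le_lt_dec k 4) as [Hk4|Hk4].
  - destruct (le_lt_dec k 3) as [Hk3|Hk3].
    + exists (fun _ => n). split; [|split].
      * intros i Hi. lia.
      * intros i Hi. exact npz.
      * reflexivity.
    + assert (k = 4%nat) by lia. subst k.
      assert (phi ^ 12 >= 1400).
      { assert (1.8392 ^ 12 <= phi ^ 12) by (apply pow_incr; lra). simpl in H |- *. lra. }
      assert (IZR n > 7) by (simpl in hsq; nra).
      assert (n7 : (7 < n)%Z) by (apply lt_IZR; lra).
      exists (fun i => match i with 1 => 1%Z | 2 => 1%Z | 3 => (n-2)%Z | _ => n end).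
      split; [|split].
      * intros i Hi. assert (i = 4%nat) by lia. subst i. simpl. lia.
      * intros i Hi. simpl in Hi. destruct i as [|[|[|[|i]]]]; lia.
      * reflexivity.
  -
    assert (h15 : phi ^ 15 <= phi ^ (3 * k)) by (apply Rle_pow; lia || lra).
    assert (9300 <= phi ^ 15).
    { assert (1.8392 ^ 15 <= phi ^ 15) by (apply pow_incr; lra). simpl in H. lra. }
    assert (n20 : 19 < IZR n) by nra.
    set (m := (k - 3)%nat).
    set (p0 := Int_part (IZR n / phi)).
    set (q0 := Int_part (IZR p0 / phi)).
    set (f := IZR n - phi * IZR p0).
    set (g := IZR p0 - phi * IZR q0).
    assert (hf : 0 <= f < phi).
    { destruct (base_Int_part (IZR n / phi)) as [b1 b2]. fold p0 in b1, b2.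
      assert (IZR n = phi * (IZR n / phi)) by (field; lra).
      unfold f. split; nra. }
    assert (hg : 0 <= g < phi).
    { destruct (base_Int_part (IZR p0 / phi)) as [b1 b2]. fold q0 in b1, b2.
      assert (IZR p0 = phi * (IZR p0 / phi)) by (field; lra).
      unfold g. split; nra. }
    destruct (box phi f g hp hf hg) as [dp [dq [HQ [He1 He2]]]].
    set (p := (p0 + dp)%Z). set (q := (q0 + dq)%Z).
    set (v := (q, p, n)).
    assert (E1 : IZR p - phi * IZR q = g + IZR dp - phi * IZR dq)
      by (unfold p, q, g; rewrite !plus_IZR; ring).
    assert (E2 : IZR n - phi * IZR p = f - phi * IZR dp)
      by (unfold p, f; rewrite !plus_IZR; ring).
    assert (Qend : QZ phi v <= 1.2 /\ 0 <= QZ phi v).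
    { unfold v; simpl QZ. unfold Qf. rewrite E1, E2. split; [exact HQ|].
      unfold Qe. set (x1 := g + IZR dp - phi * IZR dq). set (x2 := f - phi * IZR dp).
      assert (4 * (x2 ^ 2 + (phi - 1) * x1 * x2 + (phi ^ 2 - phi - 1) * x1 ^ 2)
              = (2*x2 + (phi-1)*x1)^2 + (4*(phi^2-phi-1) - (phi-1)^2) * x1^2) by ring.
      assert (0 < 4*(phi^2-phi-1) - (phi-1)^2) by nra.
      assert (0 <= (2*x2 + (phi-1)*x1)^2) by apply pow2_ge_0.
      assert (0 <= x1^2) by apply pow2_ge_0. nra. }
    assert (Lend : 2.7 * IZR n <= lamZ phi v).
    { unfold v; simpl lamZ. unfold lam.
      assert (I : phi^2 * (IZR q + (phi ^ 2 - phi) * IZR p + phi * IZR n) =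
                  (phi^2+2*phi+3) * IZR n - (phi+2) * (IZR n - phi * IZR p) - phi * (IZR p - phi * IZR q)).
      { assert (h': phi*phi*phi = phi*phi+phi+1) by (simpl in hphi; lra).
        clear -h'. simpl. nsatz. }
      rewrite E1, E2 in I.
      assert (3.3826 <= phi^2 <= 3.3831) by nra.
      nra. }
    set (v1 := backn m v).
    pose proof (lam_backn phi m v hphi) as HL. fold v1 in HL.
    pose proof (Q_backn phi m v hphi) as HQ1. fold v1 in HQ1.
    set (X := phi ^ m) in HL, HQ1.
    assert (X0 : 0 < X) by (apply pow_lt; lra).
    assert (HX : phi ^ (3 * k) = X^3 * phi^9).
    { unfold X. rewrite <- pow_mult, <- pow_add. f_equal. unfold m. lia. }
    assert (h9 : 240 <= phi ^ 9).
    { assert (1.8392 ^ 9 <= phi ^ 9) by (apply pow_incr; lra). simpl in H0. lra. }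
    assert (X3 : 240 * X^3 < 25 * IZR n ^ 2).
    { assert (0 < X^3) by (apply pow_lt; lra). nra. }
    assert (Key : 55 * X^3 * QZ phi v < (lamZ phi v)^2).
    { assert (0 < X^3) by (apply pow_lt; lra).
      assert (55 * X^3 * QZ phi v <= 66 * X^3) by nra.
      assert (7.29 * IZR n ^ 2 <= (lamZ phi v)^2) by nra.
      nra. }
    assert (A1 : 0 < lamZ phi v1).
    { apply Rmult_lt_reg_r with X; auto. rewrite Rmult_0_l, HL. lra. }
    assert (A2 : 55 * QZ phi v1 < (lamZ phi v1)^2).
    { rewrite HQ1.
      assert (lamZ phi v ^ 2 = (lamZ phi v1)^2 * X^2) by (rewrite <- HL; ring).
      assert (0 < X^2) by nra.
      assert (55 * (X * QZ phi v) * X^2 < (lamZ phi v1)^2 * X^2) by nra.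
      nra. }
    assert (Ev : v1 = backn m v) by reflexivity.
    clearbody v1.
    destruct v1 as [[x1 y1] z1] eqn:Ev1.
    simpl lamZ in A1, A2. simpl QZ in A2.
    assert (Hpos : 0 < IZR x1 /\ 0 < IZR y1 /\ 0 < IZR z1) by (apply pos_lam with phi; auto).
    destruct Hpos as [px [py pz]].
    apply lt_IZR in px. apply lt_IZR in py. apply lt_IZR in pz.
    exists (fun i => fst3 (fwdn (i - 1) (x1, y1, z1))).
    split; [|split].
    + intros i Hi.
      replace (i - 1 - 1)%nat with (S (S (i - 4))) by lia.
      replace (i - 2 - 1)%nat with (S (i - 4)) by lia.
      replace (i - 3 - 1)%nat with (i - 4)%nat by lia.
      replace (i - 1)%nat with (S (S (S (i - 4)))) by lia.
      rewrite s_rec. lia.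
    + intros i Hi. rewrite Nat.min_r in Hi by lia.
      destruct i as [|[|[|[|i]]]]; simpl; lia.
    + rewrite Ev.
      replace (k - 1)%nat with (S (S m)) by (unfold m; lia).
      simpl fwdn. rewrite fwdn_backn. unfold v. reflexivity.
Qed.
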